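(* Let $S$ be a set of axis-parallel unit squares in the plane. Then it is possible to maintain a conflict-free coloring of $S$ (with respect to points) under insertions and deletions using $O(\log n)$ colors and $O(\log n)$ recolorings per insertion and per deletion, where $n$ is the current number of squares in $S$.
   Context: A coloring of a set $S$ of regions is conflict-free (with respect to points) if for every point $q$ lying in at least one region of $S$, among the regions of $S$ containing $q$ there is one whose color is unique among them. The number of recolorings of an update is the number of objects already present whose color is changed. *)

(* Defs.v *)
From Stdlib Require Import Reals List Arith.
Import ListNotations.
Open Scope R_scope.

(* An axis-parallel unit square is identified with its lower-left corner
   (a, b); as a region it is the closed square [a, a+1] x [b, b+1]. *)
Definition square := (R * R)%type.

Definition in_square (s : square) (q : R * R) : Prop :=
  fst s <= fst q <= fst s + 1 /\ snd s <= snd q <= snd s + 1.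

Inductive update : Type :=
| Ins (s : square)
| Del (s : square).

(* Histories are lists of updates, MOST RECENT FIRST. *)
Fixpoint present (h : list update) (s : square) : Prop :=
  match h with
  | [] => False
  | Ins t :: h' => s = t \/ present h' s
  | Del t :: h' => s <> t /\ present h' s
  end.

Fixpoint valid (h : list update) : Prop :=
  match h with
  | [] => True
  | Ins t :: h' => valid h' /\ ~ present h' t
  | Del t :: h' => valid h' /\ present h' t
  end.

(* Current number of squares (correct for valid histories). *)
Fixpoint cur_size (h : list update) : nat :=
  match h with
  | [] => 0%nat
  | Ins _ :: h' => S (cur_size h')
  | Del _ :: h' => pred (cur_size h')
  end.

Definition conflict_free (S : square -> Prop) (col : square -> nat) : Prop :=
  forall q : R * R,
    (exists s, S s /\ in_square s q) ->
    exists s, S s /\ in_square s q /\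
      forall s', S s' -> in_square s' q -> s' <> s -> col s' <> col s.

Definition uses_at_most (S : square -> Prop) (col : square -> nat) (k : nat) : Prop :=
  exists cs : list nat, (length cs <= k)%nat /\ forall s, S s -> In (col s) cs.

Definition recolorings_at_most (Sold Snew : square -> Prop)
    (col_old col_new : square -> nat) (k : nat) : Prop :=
  exists L : list square, (length L <= k)%nat /\
    forall s, Sold s -> Snew s -> col_old s <> col_new s -> In s L.

(* O(log n) with an explicit constant c; the +1 handles n <= 1. *)
Definition logbound (c n : nat) : nat := (c * (Nat.log2 n + 1))%nat.

(* Main.v *)
Require Import Defs.
From Stdlib Require Import Reals List Arith Lia Lra Classical ZArith.
Import ListNotations.
Open Scope R_scope.

Definition pt := (R * R)%type.

Definition pt_eq_dec (p q : pt) : {p = q} + {p <> q}.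
Proof.
  destruct p as [a b], q as [c d].
  destruct (Req_dec_T a c) as [H1|H1]; [destruct (Req_dec_T b d) as [H2|H2]|].
  - left; subst; reflexivity.
  - right; intros H; inversion H; contradiction.
  - right; intros H; inversion H; contradiction.
Defined.

Definition ltp (p q : pt) : Prop :=
  fst p < fst q \/ (fst p = fst q /\ snd p < snd q).

Definition ltp_dec (p q : pt) : {ltp p q} + {~ ltp p q}.
Proof.
  unfold ltp.
  destruct (Rlt_dec (fst p) (fst q)) as [H|H]; [left; left; exact H|].
  destruct (Req_dec_T (fst p) (fst q)) as [H1|H1].
  - destruct (Rlt_dec (snd p) (snd q)) as [H2|H2].
    + left; right; split; assumption.
    + right; intros [H3|[_ H3]]; contradiction.
  - right; intros [H3|[H3 _]]; contradiction.
Defined.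

Lemma ltp_trans : forall p q r, ltp p q -> ltp q r -> ltp p r.
Proof. unfold ltp; intros p q r [H|[H1 H2]] [H'|[H1' H2']]; lra. Qed.

Lemma ltp_irrefl : forall p, ~ ltp p p.
Proof. unfold ltp; intros p [H|[_ H]]; lra. Qed.

Lemma ltp_total : forall p q, p <> q -> ~ ltp p q -> ltp q p.
Proof.
  unfold ltp; intros [a b] [c d] Hne Hn; simpl in *.
  destruct (Rtotal_order a c) as [H|[H|H]].
  - exfalso; apply Hn; left; exact H.
  - subst. destruct (Rtotal_order b d) as [H'|[H'|H']].
    + exfalso; apply Hn; right; split; auto.
    + subst; exfalso; apply Hne; reflexivity.
    + right; split; auto.
  - left; exact H.
Qed.

Fixpoint srt (l : list pt) : Prop :=
  match l with
  | [] => True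
  | x :: l' => (forall y, In y l' -> ltp x y) /\ srt l'
  end.

Lemma srt_app : forall l1 l2, srt (l1 ++ l2) <->
  srt l1 /\ srt l2 /\ (forall x y, In x l1 -> In y l2 -> ltp x y).
Proof.
  induction l1 as [|a l1 IH]; intros l2; simpl.
  - split; [intros H; repeat split; auto; intros x y []|tauto].
  - rewrite IH. split.
    + intros [H1 [H2 [H3 H4]]]. repeat split; auto.
      * intros y Hy; apply H1; apply in_or_app; auto.
      * intros x y [<-|Hx] Hy; auto. apply H1; apply in_or_app; auto.
    + intros [[H1 H2] [H3 H4]]. repeat split; auto.
      intros y Hy; apply in_app_or in Hy; destruct Hy; auto.
Qed.

Lemma srt_nodup : forall l, srt l -> NoDup l.
Proof.
  induction l as [|a l IH]; simpl; intros H; constructor.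
  - intros Hin. destruct H as [H _]. apply (ltp_irrefl a). auto.
  - apply IH; tauto.
Qed.

Definition keep (x p : pt) : bool := if pt_eq_dec p x then false else true.

Lemma srt_filter : forall f l, srt l -> srt (filter f l).
Proof.
  induction l as [|a l IH]; simpl; intros H; auto.
  destruct (f a); simpl; [split|]; try tauto.
  intros y Hy. apply filter_In in Hy. apply H; tauto.
Qed.

Fixpoint ins_sorted (x : pt) (l : list pt) : list pt :=
  match l with
  | [] => [x]
  | y :: l' => if ltp_dec x y then x :: y :: l' else y :: ins_sorted x l'
  end.

Lemma ins_sorted_In : forall x l z, In z (ins_sorted x l) <-> z = x \/ In z l.
Proof.
  induction l as [|y l IH]; intros z; simpl.
  - firstorder congruence.
  - destruct (ltp_dec x y); simpl; rewrite ?IH; firstorder congruence.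
Qed.

Lemma ins_sorted_srt : forall x l, srt l -> ~ In x l -> srt (ins_sorted x l).
Proof.
  induction l as [|y l IH]; simpl; intros Hs Hn.
  - split; auto. intros _ [].
  - destruct (ltp_dec x y) as [Hl|Hl]; simpl.
    + split; [|split; tauto].
      intros z [<-|Hz]; auto. apply ltp_trans with y; auto. apply Hs; auto.
    + split; [|apply IH; tauto].
      intros z Hz. apply ins_sorted_In in Hz. destruct Hz as [->|Hz].
      * apply ltp_total; auto.
      * apply Hs; auto.
Qed.

Lemma ins_sorted_app1 : forall x m l1 l2, ltp x m ->
  ins_sorted x (l1 ++ m :: l2) = ins_sorted x l1 ++ m :: l2.
Proof.
  induction l1 as [|y l1 IH]; intros l2 H; simpl.
  - destruct (ltp_dec x m); [reflexivity|contradiction].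
  - destruct (ltp_dec x y); [reflexivity|]. rewrite IH; auto.
Qed.

Lemma ins_sorted_app2 : forall x l1 l2, (forall y, In y l1 -> ~ ltp x y) ->
  ins_sorted x (l1 ++ l2) = l1 ++ ins_sorted x l2.
Proof.
  induction l1 as [|y l1 IH]; intros l2 H; simpl; auto.
  destruct (ltp_dec x y) as [Hl|Hl]; [exfalso; apply (H y); simpl; auto|].
  rewrite IH; auto. intros z Hz; apply H; simpl; auto.
Qed.

Inductive tree : Type :=
| Lf (p : pt)
| N2 (a b : tree)
| N3 (a b c : tree).

Fixpoint elems (t : tree) : list pt :=
  match t with
  | Lf p => [p]
  | N2 a b => elems a ++ elems b
  | N3 a b c => elems a ++ elems b ++ elems c
  end.

Fixpoint ht (t : tree) : nat :=
  match t with
  | Lf _ => 0%nat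
  | N2 a _ => S (ht a)
  | N3 a _ _ => S (ht a)
  end.

Inductive bal : nat -> tree -> Prop :=
| bal_L p : bal 0 (Lf p)
| bal_2 h a b : bal h a -> bal h b -> bal (S h) (N2 a b)
| bal_3 h a b c : bal h a -> bal h b -> bal h c -> bal (S h) (N3 a b c).

Lemma bal_ht : forall h t, bal h t -> ht t = h.
Proof. induction 1; simpl; auto. Qed.

Definition maxs (p q : pt) : pt := if Rle_dec (snd p) (snd q) then q else p.
Definition mins (p q : pt) : pt := if Rle_dec (snd p) (snd q) then p else q.

Fixpoint top (t : tree) : pt :=
  match t with
  | Lf p => p
  | N2 a b => maxs (top a) (top b)
  | N3 a b c => maxs (top a) (maxs (top b) (top c))
  end.

Fixpoint bot (t : tree) : pt :=
  match t with
  | Lf p => p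
  | N2 a b => mins (bot a) (bot b)
  | N3 a b c => mins (bot a) (mins (bot b) (bot c))
  end.

Lemma top_in : forall t, In (top t) (elems t).
Proof.
  induction t; simpl; unfold maxs;
  repeat match goal with |- context [Rle_dec ?x ?y] => destruct (Rle_dec x y) end;
  rewrite ?in_app_iff; auto.
Qed.

Lemma bot_in : forall t, In (bot t) (elems t).
Proof.
  induction t; simpl; unfold mins;
  repeat match goal with |- context [Rle_dec ?x ?y] => destruct (Rle_dec x y) end;
  rewrite ?in_app_iff; auto.
Qed.

Lemma top_max : forall t p, In p (elems t) -> snd p <= snd (top t).
Proof.
  induction t; simpl; intros q Hq; rewrite ?in_app_iff in Hq; unfold maxs;
  repeat match goal with |- context [Rle_dec ?x ?y] => destruct (Rle_dec x y) end;
  repeat match goal with H : _ \/ _ |- _ => destruct H end; subst; try lra;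
  repeat match goal with H : In _ _, IH : forall p, In p (elems ?t) -> _ |- _ =>
     specialize (IH _ H) end; simpl in *; try lra;
  repeat match goal with H: ~ _ <= _ |- _ => apply Rnot_le_lt in H end;
  unfold maxs in *;
  repeat match goal with H : context [Rle_dec ?x ?y] |- _ => destruct (Rle_dec x y) end; lra.
Qed.

Lemma bot_min : forall t p, In p (elems t) -> snd (bot t) <= snd p.
Proof.
  induction t; simpl; intros q Hq; rewrite ?in_app_iff in Hq; unfold mins;
  repeat match goal with |- context [Rle_dec ?x ?y] => destruct (Rle_dec x y) end;
  repeat match goal with H : _ \/ _ |- _ => destruct H end; subst; try lra;
  repeat match goal with H : In _ _, IH : forall p, In p (elems ?t) -> _ |- _ =>
     specialize (IH _ H) end; simpl in *; try lra;
  repeat match goal with H: ~ _ <= _ |- _ => apply Rnot_le_lt in H end;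
  unfold mins in *;
  repeat match goal with H : context [Rle_dec ?x ?y] |- _ => destruct (Rle_dec x y) end; lra.
Qed.

Definition special (t : tree) (q : pt) : Prop := q = top t \/ q = bot t.
Definition kindof (t : tree) (q : pt) : nat := if pt_eq_dec q (top t) then 0%nat else 1%nat.

Lemma kindof_inj : forall t p p', special t p -> special t p' -> kindof t p = kindof t p' -> p = p'.
Proof.
  unfold special, kindof; intros t p p' Hp Hp'.
  destruct (pt_eq_dec p (top t)), (pt_eq_dec p' (top t)); try congruence; intros _.
  destruct Hp, Hp'; congruence.
Qed.

Definition color := (nat * nat * nat)%type.
Definition lvl (c : color) : nat := fst (fst c).

Fixpoint col (t : tree) (s : nat) (q : pt) : color :=
  if pt_eq_dec q (top t) then (ht t, 0%nat, s) else
  if pt_eq_dec q (bot t) then (ht t, 1%nat, s) else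
  match t with
  | Lf _ => (0%nat, 0%nat, s)
  | N2 a b => if in_dec pt_eq_dec q (elems a) then col a 0 q else col b 1 q
  | N3 a b c => if in_dec pt_eq_dec q (elems a) then col a 0 q else
                if in_dec pt_eq_dec q (elems b) then col b 1 q else col c 2 q
  end.

Lemma col_eq : forall t s q, col t s q =
  if pt_eq_dec q (top t) then (ht t, 0%nat, s) else
  if pt_eq_dec q (bot t) then (ht t, 1%nat, s) else
  match t with
  | Lf _ => (0%nat, 0%nat, s)
  | N2 a b => if in_dec pt_eq_dec q (elems a) then col a 0 q else col b 1 q
  | N3 a b c => if in_dec pt_eq_dec q (elems a) then col a 0 q else
                if in_dec pt_eq_dec q (elems b) then col b 1 q else col c 2 q
  end.
Proof. destruct t; reflexivity. Qed.

Definition kids (t : tree) : list (tree * nat) :=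
  match t with
  | Lf _ => []
  | N2 a b => [(a,0%nat);(b,1%nat)]
  | N3 a b c => [(a,0%nat);(b,1%nat);(c,2%nat)]
  end.

Lemma kids_bal : forall h t c i, bal (S h) t -> In (c,i) (kids t) -> bal h c.
Proof.
  intros h t c i Hb Hin; inversion Hb; subst; simpl in Hin;
  repeat destruct Hin as [Hin|Hin]; try inversion Hin; subst; auto.
Qed.

Lemma kids_elems : forall t q, In q (elems t) -> (exists p, t = Lf p) \/
  exists c i, In (c,i) (kids t) /\ In q (elems c).
Proof.
  intros [p|a b|a b c] q H; [left; eauto|right..]; simpl in H; rewrite ?in_app_iff in H;
  repeat destruct H as [H|H]; simpl; eauto 7.
Qed.

Lemma kids_sub : forall t c i q, In (c,i) (kids t) -> In q (elems c) -> In q (elems t).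
Proof.
  intros [p|a b|a b c] c' i q H Hq; simpl in H; repeat destruct H as [H|H]; try inversion H;
  subst; simpl; rewrite ?in_app_iff; auto.
Qed.

Lemma kids_side : forall t c i c' j, In (c,i) (kids t) -> In (c',j) (kids t) -> i = j -> c = c'.
Proof.
  intros [p|a b|a b c] c0 i c1 j H1 H2 E; simpl in *;
  repeat destruct H1 as [H1|H1]; repeat destruct H2 as [H2|H2]; try inversion H1; try inversion H2;
  subst; congruence.
Qed.

Lemma kids_ord : forall t c i c' j, srt (elems t) -> In (c,i) (kids t) -> In (c',j) (kids t) ->
  (i < j)%nat -> forall x y, In x (elems c) -> In y (elems c') -> ltp x y.
Proof.
  intros [p|a b|a b c] c0 i c1 j Hs H1 H2 Hij x y Hx Hy; simpl in *;
  repeat destruct H1 as [H1|H1]; repeat destruct H2 as [H2|H2]; try inversion H1; try inversion H2;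
  subst; try lia;
  repeat (rewrite srt_app in Hs; destruct Hs as [? [Hs ?]]); eauto;
  match goal with H : forall x y, In x _ -> In y (_ ++ _) -> _ |- _ => apply H; auto; apply in_or_app; auto end.
Qed.

Lemma disj_of_ord : forall t c i c' j q, srt (elems t) -> In (c,i) (kids t) -> In (c',j) (kids t) ->
  In q (elems c) -> In q (elems c') -> c = c' /\ i = j.
Proof.
  intros t c i c' j q Hs H1 H2 Hq Hq'.
  destruct (lt_eq_lt_dec i j) as [[Hl|He]|Hl].
  - exfalso; apply (ltp_irrefl q); eapply (kids_ord t c i c' j); eauto.
  - subst; split; auto; eapply kids_side; eauto.
  - exfalso; apply (ltp_irrefl q); eapply (kids_ord t c' j c i); eauto.
Qed.

Lemma kids_col : forall t s c i q, srt (elems t) -> In (c,i) (kids t) -> In q (elems c) ->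
  ~ special t q -> col t s q = col c i q.
Proof.
  intros t s c i q Hs Hin Hq Hns. rewrite col_eq.
  unfold special in Hns.
  destruct (pt_eq_dec q (top t)); [tauto|]. destruct (pt_eq_dec q (bot t)); [tauto|].
  destruct t as [p|a b|a b c']; simpl in Hin; [contradiction|..].
  - destruct (in_dec pt_eq_dec q (elems a)) as [Ha|Ha].
    + assert (a = c /\ 0%nat = i) as [<- <-] by (eapply disj_of_ord; eauto; simpl; auto). auto.
    + repeat destruct Hin as [Hin|Hin]; inversion Hin; subst; first [reflexivity | tauto].
  - destruct (in_dec pt_eq_dec q (elems a)) as [Ha|Ha].
    + assert (a = c /\ 0%nat = i) as [<- <-] by (eapply disj_of_ord; eauto; simpl; auto). auto.
    + destruct (in_dec pt_eq_dec q (elems b)) as [Hb|Hb].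
      * assert (b = c /\ 1%nat = i) as [<- <-] by (eapply disj_of_ord; eauto; simpl; auto). auto.
      * repeat destruct Hin as [Hin|Hin]; inversion Hin; subst; first [reflexivity | tauto].
Qed.

Lemma HT : forall h t s q, bal h t -> In q (elems t) ->
  (special t q /\ col t s q = (ht t, kindof t q, s)) \/
  (~ special t q /\ (lvl (col t s q) < ht t)%nat).
Proof.
  induction h as [|h IH]; intros t s q Hb Hq.
  - inversion Hb; subst. simpl in Hq. destruct Hq as [<-|[]].
    left. split; [left; reflexivity|]. simpl. unfold kindof; simpl.
    destruct (pt_eq_dec p p); congruence.
  - rewrite col_eq. unfold special, kindof.
    destruct (pt_eq_dec q (top t)) as [E|E]; [left; auto|].
    destruct (pt_eq_dec q (bot t)) as [E'|E']; [left; auto|].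
    right. split; [tauto|].
    rewrite (bal_ht _ _ Hb).
    inversion Hb; subst; simpl in Hq; rewrite ?in_app_iff in Hq;
    repeat match goal with H : bal ?k ?x |- _ => lazymatch goal with _ : ht x = k |- _ => fail | _ => pose proof (bal_ht _ _ H) end end.
    + destruct (in_dec pt_eq_dec q (elems a)) as [Ha|Ha].
      * destruct (IH a 0%nat q) as [[_ E2]|[_ E2]]; auto; [rewrite E2; unfold lvl; simpl|]; lia.
      * destruct Hq as [Hq|Hq]; [contradiction|].
        destruct (IH b 1%nat q) as [[_ E2]|[_ E2]]; auto; [rewrite E2; unfold lvl; simpl|]; lia.
    + destruct (in_dec pt_eq_dec q (elems a)) as [Ha|Ha].
      * destruct (IH a 0%nat q) as [[_ E2]|[_ E2]]; auto; [rewrite E2; unfold lvl; simpl|]; lia.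
      * destruct (in_dec pt_eq_dec q (elems b)) as [Hb'|Hb'].
        -- destruct (IH b 1%nat q) as [[_ E2]|[_ E2]]; auto; [rewrite E2; unfold lvl; simpl|]; lia.
        -- destruct Hq as [Hq|[Hq|Hq]]; try contradiction.
           destruct (IH c 2%nat q) as [[_ E2]|[_ E2]]; auto; [rewrite E2; unfold lvl; simpl|]; lia.
Qed.

Definition updown (U : pt -> Prop) : Prop :=
  (forall p q, ltp p q -> U p -> U q) \/ (forall p q, ltp p q -> U q -> U p).
Definition Yk (k : bool) (c : R) (p : pt) : Prop := if k then c <= snd p else snd p <= c.
Definition ext (k : bool) (t : tree) : pt := if k then top t else bot t.

Lemma ext_Y : forall k c t, (exists p, In p (elems t) /\ Yk k c p) -> Yk k c (ext k t).
Proof.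
  intros k c t [p [Hp HY]]; destruct k; unfold Yk, ext in *.
  - pose proof (top_max t p Hp); lra.
  - pose proof (bot_min t p Hp); lra.
Qed.

Lemma ext_in : forall k t, In (ext k t) (elems t).
Proof. intros [|] t; [apply top_in|apply bot_in]. Qed.

Lemma ext_special : forall k t, special t (ext k t).
Proof. intros [|] t; unfold special, ext; auto. Qed.

Definition CFP (t : tree) (s : nat) (U : pt -> Prop) (k : bool) (c : R) : Prop :=
  (exists p, In p (elems t) /\ U p /\ Yk k c p) ->
  exists p, In p (elems t) /\ U p /\ Yk k c p /\
    forall p', In p' (elems t) -> U p' -> Yk k c p' -> p' <> p -> col t s p' <> col t s p.

Lemma partial_unique : forall t U c i c' j x y x' y', srt (elems t) -> updown U ->
  In (c,i) (kids t) -> In (c',j) (kids t) ->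
  In x (elems c) -> U x -> In y (elems c) -> ~ U y ->
  In x' (elems c') -> U x' -> In y' (elems c') -> ~ U y' -> c = c' /\ i = j.
Proof.
  intros t U c i c' j x y x' y' Hs HU H1 H2 Hx Ux Hy Uy Hx' Ux' Hy' Uy'.
  destruct (lt_eq_lt_dec i j) as [[Hl|He]|Hl].
  - exfalso. destruct HU as [HU|HU].
    + apply Uy'. apply HU with x; auto. eapply (kids_ord t c i c' j); eauto.
    + apply Uy. apply HU with x'; auto. eapply (kids_ord t c i c' j); eauto.
  - subst; split; auto; eapply kids_side; eauto.
  - exfalso. destruct HU as [HU|HU].
    + apply Uy. apply HU with x'; auto. eapply (kids_ord t c' j c i); eauto.
    + apply Uy'. apply HU with x; auto. eapply (kids_ord t c' j c i); eauto.
Qed.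

Lemma not_leaf : forall h t, bal (S h) t -> forall p, t <> Lf p.
Proof. intros h t H p E; subst; inversion H. Qed.

Lemma kids_ht : forall h t c i, bal (S h) t -> In (c,i) (kids t) -> ht c = h.
Proof. intros; eapply bal_ht; eapply kids_bal; eauto. Qed.

Theorem tree_cf : forall h t s, bal h t -> srt (elems t) ->
  forall U k c, updown U -> CFP t s U k c.
Proof.
  induction h as [|h IH]; intros t s Hb Hs U k c0 HU [p0 [Hp0 [HU0 HY0]]].
  - inversion Hb; subst. simpl in Hp0. destruct Hp0 as [->|[]].
    exists p0; split; [left; reflexivity|]; split; [auto|]; split; [auto|]. intros p' [<-|[]] _ _ H; congruence.
  - assert (Hht : ht t = S h) by (apply bal_ht; auto).
    destruct (classic (exists c i, In (c,i) (kids t) /\ (forall q, In q (elems c) -> U q) /\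
               exists q, In q (elems c) /\ Yk k c0 q)) as [[c [i [Hci [HfU HYc]]]] | Hno].
    + pose proof (ext_Y k c0 c HYc) as HYe.
      assert (Hine : In (ext k c) (elems c)) by apply ext_in.
      exists (ext k c). split; [eapply kids_sub; eauto|]. split; [auto|]. split; [auto|].
      intros p' Hp' HUp' HYp' Hne Heq.
      assert (Hcc : ht c = h) by (eapply kids_ht; eauto).
      destruct (HT (S h) t s (ext k c) Hb) as [[Hsp Hcol]|[Hnsp Hcol]]; [eapply kids_sub; eauto| |].
      * destruct (HT (S h) t s p' Hb Hp') as [[Hsp' Hcol']|[Hnsp' Hcol']].
        -- apply Hne. apply (kindof_inj t); auto. rewrite Hcol, Hcol' in Heq. congruence.
        -- rewrite Heq, Hcol in Hcol'. unfold lvl in Hcol'; simpl in Hcol'. lia.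
      * rewrite (kids_col t s c i (ext k c)) in Heq; auto.
        destruct (HT h c i (ext k c)) as [[_ Hc1]|[Hn _]]; [eapply kids_bal; eauto|auto| |exfalso; apply Hn, ext_special].
        rewrite Hc1 in Heq.
        destruct (HT (S h) t s p' Hb Hp') as [[Hsp' Hcol']|[Hnsp' Hcol']].
        -- rewrite Hcol' in Heq. inversion Heq. lia.
        -- destruct (kids_elems t p' Hp') as [[pp E]|[c' [j [Hcj Hpc']]]]; [exfalso; eapply not_leaf; eauto|].
           rewrite (kids_col t s c' j p') in Heq; auto.
           assert (Hc'h : ht c' = h) by (eapply kids_ht; eauto).
           destruct (HT h c' j p') as [[Hsp2 Hc2]|[Hn2 Hc2]]; [eapply kids_bal; eauto|auto| |].
           ++ rewrite Hc2 in Heq. inversion Heq; subst.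
              assert (c' = c) by (eapply kids_side; eauto). subst c'.
              apply Hne. apply (kindof_inj c); auto. apply ext_special.
           ++ rewrite Heq in Hc2. unfold lvl in Hc2; simpl in Hc2. lia.
    + destruct (kids_elems t p0 Hp0) as [[pp E]|[c1 [i1 [Hc1 Hp1]]]]; [exfalso; eapply not_leaf; eauto|].
      assert (Hnot : forall c i, In (c,i) (kids t) -> forall q, In q (elems c) -> Yk k c0 q ->
                 exists y, In y (elems c) /\ ~ U y).
      { intros c i Hci q Hq HYq. apply NNPP. intros Hn. apply Hno. exists c, i. split; auto.
        split; [|eauto]. intros q' Hq'. apply NNPP. intros HnU. apply Hn. eauto. }
      assert (Hall : forall p', In p' (elems t) -> U p' -> Yk k c0 p' -> In p' (elems c1)).
      { intros p' Hp' HUp' HYp'.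
        destruct (kids_elems t p' Hp') as [[pp E]|[c' [j [Hcj Hpc']]]]; [exfalso; eapply not_leaf; eauto|].
        destruct (Hnot c1 i1 Hc1 p0 Hp1 HY0) as [y1 [Hy1 Hny1]].
        destruct (Hnot c' j Hcj p' Hpc' HYp') as [y' [Hy' Hny']].
        destruct (partial_unique t U c1 i1 c' j p0 y1 p' y') as [<- _]; auto. }
      assert (Hb1 : bal h c1) by (eapply kids_bal; eauto).
      assert (Hs1 : srt (elems c1)).
      { destruct t as [pp|a b|a b c]; simpl in Hc1, Hs;
        repeat destruct Hc1 as [Hc1|Hc1]; try inversion Hc1; subst;
        repeat (rewrite srt_app in Hs; destruct Hs as [? [Hs ?]]); tauto. }
      destruct (IH c1 i1 Hb1 Hs1 U k c0 HU) as [p [Hp [HUp [HYp Huniq]]]]; [eauto|].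
      exists p. split; [eapply kids_sub; eauto|]. split; [auto|]. split; [auto|].
      intros p' Hp' HUp' HYp' Hne Heq.
      assert (Hp'1 : In p' (elems c1)) by auto.
      assert (Hc1h : ht c1 = h) by (eapply kids_ht; eauto).
      destruct (HT (S h) t s p Hb) as [[Hsp Hcol]|[Hnsp Hcol]]; [eapply kids_sub; eauto| |];
      destruct (HT (S h) t s p' Hb Hp') as [[Hsp' Hcol']|[Hnsp' Hcol']].
      * apply Hne. apply (kindof_inj t); auto. rewrite Hcol, Hcol' in Heq. congruence.
      * rewrite Heq, Hcol in Hcol'. unfold lvl in Hcol'; simpl in Hcol'. lia.
      * rewrite <- Heq, Hcol' in Hcol. unfold lvl in Hcol; simpl in Hcol. lia.
      * rewrite (kids_col t s c1 i1 p) in Heq by auto. rewrite (kids_col t s c1 i1 p') in Heq by auto.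
        eapply Huniq; eauto.
Qed.

Fixpoint inner (t : tree) : list (tree * nat) :=
  match t with
  | Lf _ => []
  | N2 a b => ((a,0%nat) :: inner a) ++ ((b,1%nat) :: inner b)
  | N3 a b c => ((a,0%nat) :: inner a) ++ ((b,1%nat) :: inner b) ++ ((c,2%nat) :: inner c)
  end.

Definition LS (t : tree) (s : nat) : list (tree * nat) := (t, s) :: inner t.

Lemma inner_kids : forall t e, In e (inner t) <-> exists c i, In (c,i) (kids t) /\ In e (LS c i).
Proof.
  intros [p|a b|a b c] e; simpl; unfold LS; rewrite ?in_app_iff; simpl; rewrite ?in_app_iff; simpl.
  - firstorder.
  - split.
    + intros H; repeat destruct H as [H|H];
      first [ exists a, 0%nat; split; [left; reflexivity|simpl; tauto]
            | exists b, 1%nat; split; [right; left; reflexivity|simpl; tauto] ].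
    + intros [c [i [H1 H2]]]. repeat destruct H1 as [H1|H1]; inversion H1; subst; simpl in H2; tauto.
  - split.
    + intros H; repeat destruct H as [H|H];
      first [ exists a, 0%nat; split; [left; reflexivity|simpl; tauto]
            | exists b, 1%nat; split; [right; left; reflexivity|simpl; tauto]
            | exists c, 2%nat; split; [right; right; left; reflexivity|simpl; tauto] ].
    + intros [c' [i [H1 H2]]]. repeat destruct H1 as [H1|H1]; inversion H1; subst; simpl in H2; tauto.
Qed.

Lemma inner_sub : forall h t e, bal h t -> In e (inner t) ->
  incl (elems (fst e)) (elems t) /\ (ht (fst e) < ht t)%nat.
Proof.
  induction h as [|h IH]; intros t e Hb He.
  - inversion Hb; subst; simpl in He; contradiction.
  - apply inner_kids in He. destruct He as [c [i [Hci He]]].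
    assert (Hbc : bal h c) by (eapply kids_bal; eauto).
    rewrite (bal_ht _ _ Hb).
    destruct He as [<-|He]; simpl.
    + split; [intros x Hx; eapply kids_sub; eauto|]. rewrite (bal_ht _ _ Hbc); lia.
    + destruct (IH c e Hbc He) as [H1 H2]. split.
      * intros x Hx; eapply kids_sub; eauto.
      * rewrite (bal_ht _ _ Hbc) in H2; lia.
Qed.

Lemma LS_sub : forall h t s T σ, bal h t -> In (T,σ) (LS t s) ->
  ((T,σ) = (t,s)) \/ (incl (elems T) (elems t) /\ (ht T < ht t)%nat).
Proof.
  intros h t s T σ Hb [E|H]; [left; auto|right]. apply (inner_sub h t (T,σ)); auto.
Qed.

Lemma special_in : forall T q, special T q -> In q (elems T).
Proof. intros T q [->| ->]; [apply top_in|apply bot_in]. Qed.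

Lemma char : forall h t s q, bal h t -> srt (elems t) -> In q (elems t) ->
  exists T σ, In (T,σ) (LS t s) /\ special T q /\ col t s q = (ht T, kindof T q, σ) /\
   (forall T' σ', In (T',σ') (LS t s) -> special T' q -> (ht T' <= ht T)%nat) /\
   (forall T' σ', In (T',σ') (LS t s) -> special T' q -> ht T' = ht T -> T' = T /\ σ' = σ).
Proof.
  induction h as [|h IH]; intros t s q Hb Hs Hq.
  - inversion Hb; subst. simpl in Hq. destruct Hq as [<-|[]].
    exists (Lf p), s. split; [left; auto|]. split; [left; auto|].
    split; [simpl; unfold kindof; simpl; destruct (pt_eq_dec p p); congruence|].
    split; intros T' σ' [E|[]]; inversion E; subst; auto.
  - destruct (HT (S h) t s q Hb Hq) as [[Hsp Hcol]|[Hnsp Hcol]].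
    + exists t, s. split; [left; auto|]. split; auto. split; auto. split.
      * intros T' σ' H _. destruct (LS_sub _ _ _ _ _ Hb H) as [E|[_ E]]; [inversion E; subst; auto|lia].
      * intros T' σ' H _ E'. destruct (LS_sub _ _ _ _ _ Hb H) as [E|[_ E]]; [inversion E; subst; auto|lia].
    + destruct (kids_elems t q Hq) as [[pp E]|[c [i [Hci Hqc]]]]; [exfalso; eapply not_leaf; eauto|].
      assert (Hbc : bal h c) by (eapply kids_bal; eauto).
      assert (Hsc : srt (elems c)).
      { destruct t as [pp|a b|a b c']; simpl in Hci, Hs;
        repeat destruct Hci as [Hci|Hci]; try inversion Hci; subst;
        repeat (rewrite srt_app in Hs; destruct Hs as [? [Hs ?]]); tauto. }
      destruct (IH c i q Hbc Hsc Hqc) as [T [σ [H1 [H2 [H3 [H4 H5]]]]]].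
      assert (Hloc : forall T' σ', In (T',σ') (LS t s) -> special T' q -> In (T',σ') (LS c i)).
      { intros T' σ' H Hsp. destruct H as [E|H]; [inversion E; subst; contradiction|].
        apply inner_kids in H. destruct H as [c' [j [Hcj H]]].
        assert (Hq' : In q (elems c')).
        { destruct (LS_sub _ _ _ _ _ (kids_bal _ _ _ _ Hb Hcj) H) as [E|[Hinc _]].
          - inversion E; subst; apply special_in; auto.
          - apply Hinc, special_in; auto. }
        destruct (disj_of_ord t c i c' j q) as [<- <-]; auto. }
      exists T, σ. split; [right; apply inner_kids; eauto|]. split; auto. split.
      * rewrite (kids_col t s c i q); auto.
      * split; intros T' σ' H Hsp; [apply (H4 T' σ')|apply (H5 T' σ')]; auto.
Qed.

Lemma col_det : forall h1 t1 s1 h2 t2 s2 q, bal h1 t1 -> srt (elems t1) -> bal h2 t2 -> srt (elems t2) ->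
  In q (elems t1) -> In q (elems t2) ->
  (forall T σ, special T q -> (In (T,σ) (LS t1 s1) <-> In (T,σ) (LS t2 s2))) ->
  col t1 s1 q = col t2 s2 q.
Proof.
  intros h1 t1 s1 h2 t2 s2 q Hb1 Hs1 Hb2 Hs2 Hq1 Hq2 Hag.
  destruct (char h1 t1 s1 q) as [T1 [σ1 [A1 [B1 [C1 [D1 E1]]]]]]; auto.
  destruct (char h2 t2 s2 q) as [T2 [σ2 [A2 [B2 [C2 [D2 E2]]]]]]; auto.
  assert (X1 : In (T1,σ1) (LS t2 s2)) by (apply Hag; auto).
  assert (X2 : In (T2,σ2) (LS t1 s1)) by (apply Hag; auto).
  pose proof (D2 _ _ X1 B1). pose proof (D1 _ _ X2 B2).
  destruct (E2 T1 σ1) as [-> ->]; auto; try lia. congruence.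
Qed.

Definition Diff {A : Type} (l1 l2 : list A) (k : nat) : Prop :=
  exists L, (length L <= k)%nat /\
    forall e, (In e l1 /\ ~ In e l2) \/ (In e l2 /\ ~ In e l1) -> In e L.

Definition specials (L : list (tree * nat)) : list pt :=
  flat_map (fun e => [top (fst e); bot (fst e)]) L.

Lemma specials_length : forall L, length (specials L) = (2 * length L)%nat.
Proof. induction L; simpl; auto. rewrite IHL. lia. Qed.

Lemma recolor : forall h1 t1 s1 h2 t2 s2 k, bal h1 t1 -> srt (elems t1) -> bal h2 t2 -> srt (elems t2) ->
  Diff (LS t1 s1) (LS t2 s2) k ->
  exists L : list pt, (length L <= 2 * k)%nat /\
    forall p, In p (elems t1) -> In p (elems t2) -> col t1 s1 p <> col t2 s2 p -> In p L.
Proof.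
  intros h1 t1 s1 h2 t2 s2 k Hb1 Hs1 Hb2 Hs2 [Ld [Hlen HL]].
  exists (specials Ld). split; [rewrite specials_length; lia|].
  intros p Hp1 Hp2 Hne. apply NNPP; intros Hnin. apply Hne.
  apply (col_det h1 t1 s1 h2 t2 s2 p); auto.
  intros T σ Hsp. split; intros H; apply NNPP; intros H'; apply Hnin;
  unfold specials; apply in_flat_map; exists (T,σ); (split; [apply HL; tauto|]);
  simpl; destruct Hsp as [->| ->]; auto.
Qed.

Lemma Diff_refl : forall {A} (l : list A), Diff l l 0.
Proof. intros A l; exists []; split; auto; intros e [[H1 H2]|[H1 H2]]; contradiction. Qed.

Lemma Diff_le : forall {A} (l1 l2 : list A) k k', Diff l1 l2 k -> (k <= k')%nat -> Diff l1 l2 k'.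
Proof. intros A l1 l2 k k' [L [H1 H2]] H; exists L; split; auto; lia. Qed.

Lemma Diff_step : forall {A} (Al Bl A' B' X Y : list A) k, Diff Al Bl k ->
  (forall e, In e A' -> In e Al \/ In e X \/ In e B') ->
  (forall e, In e B' -> In e Bl \/ In e Y \/ In e A') ->
  (forall e, In e Bl -> In e B') -> (forall e, In e Al -> In e A') ->
  Diff A' B' (k + length X + length Y).
Proof.
  intros A Al Bl A' B' X Y k [L [HL HLe]] H1 H2 H3 H4.
  exists (L ++ X ++ Y). split; [rewrite !length_app; lia|].
  intros e [[Ha Hb]|[Ha Hb]]; rewrite !in_app_iff.
  - destruct (H1 e Ha) as [H|[H|H]]; [|tauto|contradiction].
    left; apply HLe; left; split; auto.
  - destruct (H2 e Ha) as [H|[H|H]]; [|tauto|contradiction].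
    left; apply HLe; right; split; auto.
Qed.

Ltac mem := intros ?e ?He; repeat (progress (simpl in *; repeat rewrite in_app_iff in *)); tauto.

Fixpoint minel (t : tree) : pt :=
  match t with Lf p => p | N2 a _ => minel a | N3 a _ _ => minel a end.

Lemma minel_hd : forall t, exists l, elems t = minel t :: l.
Proof.
  induction t as [p|a IHa b _|a IHa b _ c _]; simpl; [eauto| |];
  destruct IHa as [l E]; rewrite E; simpl; eauto.
Qed.

Lemma minel_in : forall t, In (minel t) (elems t).
Proof. intros t; destruct (minel_hd t) as [l ->]; left; auto. Qed.

Inductive ires : Type := One (t : tree) | Two (a b : tree).

Fixpoint ins (x : pt) (t : tree) : ires :=
  match t with
  | Lf p => if ltp_dec x p then Two (Lf x) (Lf p) else Two (Lf p) (Lf x)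
  | N2 a b =>
      if ltp_dec x (minel b) then
        match ins x a with One a' => One (N2 a' b) | Two a1 a2 => One (N3 a1 a2 b) end
      else
        match ins x b with One b' => One (N2 a b') | Two b1 b2 => One (N3 a b1 b2) end
  | N3 a b c =>
      if ltp_dec x (minel b) then
        match ins x a with One a' => One (N3 a' b c) | Two a1 a2 => Two (N2 a1 a2) (N2 b c) end
      else if ltp_dec x (minel c) then
        match ins x b with One b' => One (N3 a b' c) | Two b1 b2 => Two (N2 a b1) (N2 b2 c) end
      else
        match ins x c with One c' => One (N3 a b c') | Two c1 c2 => Two (N2 a b) (N2 c1 c2) end
  end.

Definition ielems (r : ires) : list pt :=
  match r with One t => elems t | Two a b => elems a ++ elems b end.
Definition iinner (r : ires) : list (tree * nat) :=
  match r with One t => inner t | Two a b => inner a ++ inner b end.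

Lemma skip_lemma : forall x l1 m, (forall y, In y l1 -> ltp y m) -> ~ ltp x m ->
  forall y, In y l1 -> ~ ltp x y.
Proof. intros x l1 m H Hn y Hy Hl. apply Hn. eapply ltp_trans; eauto. Qed.

Lemma ins_elems : forall t x, srt (elems t) -> ielems (ins x t) = ins_sorted x (elems t).
Proof.
  induction t as [p|a IHa b IHb|a IHa b IHb c IHc]; intros x Hs.
  - simpl. destruct (ltp_dec x p); reflexivity.
  - simpl in Hs |- *. apply srt_app in Hs. destruct Hs as [Sa [Sb Cab]].
    destruct (minel_hd b) as [lb Eb].
    destruct (ltp_dec x (minel b)) as [Hl|Hl].
    + rewrite Eb, ins_sorted_app1 by auto. rewrite <- Eb, <- IHa by auto.
      destruct (ins x a); simpl; rewrite ?app_assoc; reflexivity.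
    + rewrite ins_sorted_app2.
      2: { apply skip_lemma with (minel b); auto. intros y Hy; apply Cab; auto; apply minel_in. }
      rewrite <- IHb by auto. destruct (ins x b); simpl; reflexivity.
  - simpl in Hs |- *. apply srt_app in Hs. destruct Hs as [Sa [Sbc Cabc]].
    apply srt_app in Sbc. destruct Sbc as [Sb [Sc Cbc]].
    destruct (minel_hd b) as [lb Eb]. destruct (minel_hd c) as [lc Ec].
    destruct (ltp_dec x (minel b)) as [Hl|Hl].
    + rewrite Eb, <- app_comm_cons, ins_sorted_app1 by auto. rewrite app_comm_cons, <- Eb, <- IHa by auto.
      destruct (ins x a); simpl; rewrite ?app_assoc; reflexivity.
    + rewrite ins_sorted_app2.
      2: { apply skip_lemma with (minel b); auto. intros y Hy; apply Cabc; auto; apply in_or_app; left; apply minel_in. }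
      destruct (ltp_dec x (minel c)) as [Hl'|Hl'].
      * rewrite Ec, ins_sorted_app1 by auto. rewrite <- Ec, <- IHb by auto.
        destruct (ins x b); simpl; rewrite ?app_assoc; reflexivity.
      * rewrite ins_sorted_app2.
        2: { apply skip_lemma with (minel c); auto. intros y Hy; apply Cbc; auto; apply minel_in. }
        rewrite <- IHc by auto. destruct (ins x c); simpl; rewrite ?app_assoc; reflexivity.
Qed.

Definition ibal (h : nat) (r : ires) : Prop :=
  match r with One t => bal h t | Two a b => bal h a /\ bal h b end.

Lemma ins_bal : forall h t x, bal h t -> ibal h (ins x t).
Proof.
  induction h as [|h IH]; intros t x Hb.
  - inversion Hb; subst; simpl. destruct (ltp_dec x p); simpl; split; constructor.
  - inversion Hb; subst; simpl.
    + destruct (ltp_dec x (minel b)).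
      * pose proof (IH a x ltac:(assumption)) as Ha. destruct (ins x a) as [?|? ?]; simpl in *; [|destruct Ha]; repeat split; try constructor; auto.
      * pose proof (IH b x ltac:(assumption)) as Hbb. destruct (ins x b) as [?|? ?]; simpl in *; [|destruct Hbb]; repeat split; try constructor; auto.
    + destruct (ltp_dec x (minel b)).
      * pose proof (IH a x ltac:(assumption)) as Ha. destruct (ins x a) as [?|? ?]; simpl in *; [|destruct Ha]; repeat split; try constructor; auto.
      * destruct (ltp_dec x (minel c)).
        -- pose proof (IH b x ltac:(assumption)) as Hbb. destruct (ins x b) as [?|? ?]; simpl in *; [|destruct Hbb]; repeat split; try constructor; auto.
        -- pose proof (IH c x ltac:(assumption)) as Hc. destruct (ins x c) as [?|? ?]; simpl in *; [|destruct Hc]; repeat split; try constructor; auto.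
Qed.

Lemma ins_diff : forall h t x, bal h t -> Diff (inner t) (iinner (ins x t)) (7 * h).
Proof.
  induction h as [|h IH]; intros t x Hb.
  - inversion Hb; subst; simpl. destruct (ltp_dec x p); simpl; apply Diff_refl.
  - inversion Hb; subst; simpl.
    + destruct (ltp_dec x (minel b)).
      * pose proof (IH a x ltac:(assumption)) as D. destruct (ins x a) as [a'|a1 a2]; simpl in D |- *.
        -- eapply Diff_le; [eapply (Diff_step _ _ _ _ [(a,0%nat)] [(a',0%nat)] _ D); mem|simpl; lia].
        -- eapply Diff_le; [eapply (Diff_step _ _ _ _ [(a,0%nat);(b,1%nat)] [(a1,0%nat);(a2,1%nat);(b,2%nat)] _ D); mem|simpl; lia].
      * pose proof (IH b x ltac:(assumption)) as D. destruct (ins x b) as [b'|b1 b2]; simpl in D |- *.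
        -- eapply Diff_le; [eapply (Diff_step _ _ _ _ [(b,1%nat)] [(b',1%nat)] _ D); mem|simpl; lia].
        -- eapply Diff_le; [eapply (Diff_step _ _ _ _ [(b,1%nat)] [(b1,1%nat);(b2,2%nat)] _ D); mem|simpl; lia].
    + destruct (ltp_dec x (minel b)).
      * pose proof (IH a x ltac:(assumption)) as D. destruct (ins x a) as [a'|a1 a2]; simpl in D |- *.
        -- eapply Diff_le; [eapply (Diff_step _ _ _ _ [(a,0%nat)] [(a',0%nat)] _ D); mem|simpl; lia].
        -- eapply Diff_le; [eapply (Diff_step _ _ _ _ [(a,0%nat);(b,1%nat);(c,2%nat)] [(a1,0%nat);(a2,1%nat);(b,0%nat);(c,1%nat)] _ D); mem|simpl; lia].
      * destruct (ltp_dec x (minel c)).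
        -- pose proof (IH b x ltac:(assumption)) as D. destruct (ins x b) as [b'|b1 b2]; simpl in D |- *.
           ++ eapply Diff_le; [eapply (Diff_step _ _ _ _ [(b,1%nat)] [(b',1%nat)] _ D); mem|simpl; lia].
           ++ eapply Diff_le; [eapply (Diff_step _ _ _ _ [(b,1%nat);(c,2%nat)] [(b1,1%nat);(b2,0%nat);(c,1%nat)] _ D); mem|simpl; lia].
        -- pose proof (IH c x ltac:(assumption)) as D. destruct (ins x c) as [c'|c1 c2]; simpl in D |- *.
           ++ eapply Diff_le; [eapply (Diff_step _ _ _ _ [(c,2%nat)] [(c',2%nat)] _ D); mem|simpl; lia].
           ++ eapply Diff_le; [eapply (Diff_step _ _ _ _ [(a,0%nat);(b,1%nat);(c,2%nat)] [(a,0%nat);(b,1%nat);(c1,0%nat);(c2,1%nat)] _ D); mem|simpl; lia].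
Qed.

Inductive dres : Type := DE | DF (t : tree) | DS (t : tree).

Fixpoint del (x : pt) (t : tree) : dres :=
  match t with
  | Lf _ => DE
  | N2 a b =>
    if in_dec pt_eq_dec x (elems a) then
      match del x a with
      | DE => DS b
      | DF a' => DF (N2 a' b)
      | DS a' => match b with
                 | N2 b1 b2 => DS (N3 a' b1 b2)
                 | N3 b1 b2 b3 => DF (N2 (N2 a' b1) (N2 b2 b3))
                 | Lf _ => DF t end
      end
    else
      match del x b with
      | DE => DS a
      | DF b' => DF (N2 a b')
      | DS b' => match a with
                 | N2 a1 a2 => DS (N3 a1 a2 b')
                 | N3 a1 a2 a3 => DF (N2 (N2 a1 a2) (N2 a3 b'))
                 | Lf _ => DF t end
      end
  | N3 a b c =>
    if in_dec pt_eq_dec x (elems a) then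
      match del x a with
      | DE => DF (N2 b c)
      | DF a' => DF (N3 a' b c)
      | DS a' => match b with
                 | N2 b1 b2 => DF (N2 (N3 a' b1 b2) c)
                 | N3 b1 b2 b3 => DF (N3 (N2 a' b1) (N2 b2 b3) c)
                 | Lf _ => DF t end
      end
    else if in_dec pt_eq_dec x (elems b) then
      match del x b with
      | DE => DF (N2 a c)
      | DF b' => DF (N3 a b' c)
      | DS b' => match a with
                 | N2 a1 a2 => DF (N2 (N3 a1 a2 b') c)
                 | N3 a1 a2 a3 => DF (N3 (N2 a1 a2) (N2 a3 b') c)
                 | Lf _ => DF t end
      end
    else
      match del x c with
      | DE => DF (N2 a b)
      | DF c' => DF (N3 a b c')
      | DS c' => match b with
                 | N2 b1 b2 => DF (N2 a (N3 b1 b2 c'))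
                 | N3 b1 b2 b3 => DF (N3 a (N2 b1 b2) (N2 b3 c'))
                 | Lf _ => DF t end
      end
  end.

Definition DP (h : nat) (t : tree) (x : pt) (r : dres) : Prop :=
  match r with
  | DE => h = 0%nat /\ t = Lf x
  | DF t' => bal h t' /\ elems t' = filter (keep x) (elems t) /\ Diff (inner t) (inner t') (11 * h)
  | DS t' => (exists h', h = S h' /\ bal h' t') /\ elems t' = filter (keep x) (elems t) /\
             Diff (inner t) (inner t') (11 * h)
  end.

Lemma filter_keep_notin : forall x l, ~ In x l -> filter (keep x) l = l.
Proof.
  induction l as [|y l IH]; simpl; intros H; auto.
  unfold keep at 1. destruct (pt_eq_dec y x); [subst; tauto|]. rewrite IH; auto.
Qed.

Lemma filter_keep_single : forall x, filter (keep x) [x] = [].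
Proof. intros x; simpl; unfold keep; destruct (pt_eq_dec x x); congruence. Qed.

Lemma notin_app : forall (x : pt) l1 l2, ~ In x (l1 ++ l2) -> ~ In x l1 /\ ~ In x l2.
Proof. intros; rewrite in_app_iff in *; tauto. Qed.

Ltac split_notin := repeat match goal with H : ~ In ?x (?l1 ++ ?l2) |- _ =>
  apply notin_app in H; destruct H end.

Ltac felems E :=
  simpl; rewrite ?filter_app; rewrite <- E; split_notin;
  repeat (rewrite filter_keep_notin by assumption); rewrite ?app_assoc; reflexivity.

Ltac dstep D X Y :=
  eapply Diff_le; [eapply (Diff_step _ _ _ _ X Y _ D); mem | simpl; lia].

Lemma cross_notin : forall (x : pt) l1 l2, srt (l1 ++ l2) -> In x l1 -> ~ In x l2.
Proof.
  intros x l1 l2 H H1 H2. apply srt_app in H. destruct H as [_ [_ H]].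
  apply (ltp_irrefl x). auto.
Qed.

Ltac fel E :=
  cbn [elems] in *; rewrite ?filter_app; try rewrite filter_keep_single; try rewrite <- E; split_notin;
  repeat (rewrite filter_keep_notin by assumption); rewrite ?app_nil_r, ?app_assoc, ?app_nil_r; try reflexivity.

Ltac fel0 :=
  cbn [elems] in *; rewrite ?filter_app; try rewrite filter_keep_single; split_notin;
  repeat (rewrite filter_keep_notin by assumption); rewrite ?app_nil_r, ?app_assoc, ?app_nil_r; try reflexivity.

Ltac balt := repeat (first [assumption | constructor]).

Lemma del_spec : forall h t x, bal h t -> srt (elems t) -> In x (elems t) -> DP h t x (del x t).
Proof.
  induction h as [|h IH]; intros t x Hb Hs Hx.
  - inversion Hb; subst. simpl in Hx; destruct Hx as [<-|[]]. simpl. split; auto.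
  - destruct t as [p|a b|a b c]; [inversion Hb| |].
    +
      assert (Ba : bal h a) by (inversion Hb; auto). assert (Bb : bal h b) by (inversion Hb; auto).
      cbn [elems] in Hs, Hx. pose proof Hs as Hs'. apply srt_app in Hs'. destruct Hs' as [Sa [Sb Cab]].
      cbn [del]. destruct (in_dec pt_eq_dec x (elems a)) as [Ha|Ha].
      * assert (nb : ~ In x (elems b)) by (eapply cross_notin; eauto).
        pose proof (IH a x Ba Sa Ha) as R.
        destruct (del x a) as [|a'|a'] eqn:E; cbn [DP] in R |- *.
        -- destruct R as [-> ->]. split; [exists 0%nat; auto|]. split; [fel0|].
           dstep (Diff_refl (inner b)) [(Lf x,0%nat);(b,1%nat)] (@nil (tree*nat)).
        -- destruct R as [R1 [R2 R3]]. split; [balt|]. split; [fel R2|].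
           dstep R3 [(a,0%nat)] [(a',0%nat)].
        -- destruct R as [[h' [-> R1]] [R2 R3]].
           inversion Bb as [|hh b1 b2 B1 B2|hh b1 b2 b3 B1 B2 B3]; subst; cbn [DP].
           ++ split; [exists (S h'); split; [reflexivity|balt]|]. split; [fel R2|].
              dstep R3 [(a,0%nat);(N2 b1 b2,1%nat);(b1,0%nat);(b2,1%nat)] [(a',0%nat);(b1,1%nat);(b2,2%nat)].
           ++ split; [balt|]. split; [fel R2|].
              dstep R3 [(a,0%nat);(N3 b1 b2 b3,1%nat);(b1,0%nat);(b2,1%nat);(b3,2%nat)]
                       [(N2 a' b1,0%nat);(a',0%nat);(b1,1%nat);(N2 b2 b3,1%nat);(b2,0%nat);(b3,1%nat)].
      * assert (Hb' : In x (elems b)) by (apply in_app_or in Hx; tauto).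
        pose proof (IH b x Bb Sb Hb') as R.
        destruct (del x b) as [|b'|b'] eqn:E; cbn [DP] in R |- *.
        -- destruct R as [-> ->]. split; [exists 0%nat; auto|]. split; [fel0|].
           dstep (Diff_refl (inner a)) [(a,0%nat);(Lf x,1%nat)] (@nil (tree*nat)).
        -- destruct R as [R1 [R2 R3]]. split; [balt|]. split; [fel R2|].
           dstep R3 [(b,1%nat)] [(b',1%nat)].
        -- destruct R as [[h' [-> R1]] [R2 R3]].
           inversion Ba as [|hh a1 a2 A1 A2|hh a1 a2 a3 A1 A2 A3]; subst; cbn [DP].
           ++ split; [exists (S h'); split; [reflexivity|balt]|]. split; [fel R2|].
              dstep R3 [(N2 a1 a2,0%nat);(b,1%nat);(a1,0%nat);(a2,1%nat)] [(a1,0%nat);(a2,1%nat);(b',2%nat)].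
           ++ split; [balt|]. split; [fel R2|].
              dstep R3 [(N3 a1 a2 a3,0%nat);(b,1%nat);(a1,0%nat);(a2,1%nat);(a3,2%nat)]
                       [(N2 a1 a2,0%nat);(a1,0%nat);(a2,1%nat);(N2 a3 b',1%nat);(a3,0%nat);(b',1%nat)].
    +
      assert (Ba : bal h a) by (inversion Hb; auto). assert (Bb : bal h b) by (inversion Hb; auto).
      assert (Bc : bal h c) by (inversion Hb; auto).
      cbn [elems] in Hs, Hx. pose proof Hs as Hs'. apply srt_app in Hs'. destruct Hs' as [Sa [Sbc Cabc]].
      pose proof Sbc as Sbc'. apply srt_app in Sbc'. destruct Sbc' as [Sb [Sc Cbc]].
      cbn [del]. destruct (in_dec pt_eq_dec x (elems a)) as [Ha|Ha].
      * assert (nbc : ~ In x (elems b ++ elems c)) by (eapply cross_notin; eauto).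
        pose proof (IH a x Ba Sa Ha) as R.
        destruct (del x a) as [|a'|a'] eqn:E; cbn [DP] in R |- *.
        -- destruct R as [-> ->]. split; [balt|]. split; [fel0|].
           dstep (Diff_refl (@nil (tree*nat))) [(Lf x,0%nat);(b,1%nat);(c,2%nat)] [(b,0%nat);(c,1%nat)].
        -- destruct R as [R1 [R2 R3]]. split; [balt|]. split; [fel R2|].
           dstep R3 [(a,0%nat)] [(a',0%nat)].
        -- destruct R as [[h' [-> R1]] [R2 R3]].
           inversion Bb as [|hh b1 b2 B1 B2|hh b1 b2 b3 B1 B2 B3]; subst; cbn [DP].
           ++ split; [balt|]. split; [fel R2|].
              dstep R3 [(a,0%nat);(N2 b1 b2,1%nat);(b1,0%nat);(b2,1%nat);(c,2%nat)]
                       [(N3 a' b1 b2,0%nat);(a',0%nat);(b1,1%nat);(b2,2%nat);(c,1%nat)].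
           ++ split; [balt|]. split; [fel R2|].
              dstep R3 [(a,0%nat);(N3 b1 b2 b3,1%nat);(b1,0%nat);(b2,1%nat);(b3,2%nat)]
                       [(N2 a' b1,0%nat);(a',0%nat);(b1,1%nat);(N2 b2 b3,1%nat);(b2,0%nat);(b3,1%nat)].
      * destruct (in_dec pt_eq_dec x (elems b)) as [Hb'|Hb'].
        -- assert (nc : ~ In x (elems c)) by (eapply (cross_notin x (elems b)); eauto).
           pose proof (IH b x Bb Sb Hb') as R.
           destruct (del x b) as [|b'|b'] eqn:E; cbn [DP] in R |- *.
           ++ destruct R as [-> ->]. split; [balt|]. split; [fel0|].
              dstep (Diff_refl (@nil (tree*nat))) [(a,0%nat);(Lf x,1%nat);(c,2%nat)] [(a,0%nat);(c,1%nat)].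
           ++ destruct R as [R1 [R2 R3]]. split; [balt|]. split; [fel R2|].
              dstep R3 [(b,1%nat)] [(b',1%nat)].
           ++ destruct R as [[h' [-> R1]] [R2 R3]].
              inversion Ba as [|hh a1 a2 A1 A2|hh a1 a2 a3 A1 A2 A3]; subst; cbn [DP].
              ** split; [balt|]. split; [fel R2|].
                 dstep R3 [(N2 a1 a2,0%nat);(b,1%nat);(c,2%nat)] [(N3 a1 a2 b',0%nat);(b',2%nat);(c,1%nat)].
              ** split; [balt|]. split; [fel R2|].
                 dstep R3 [(N3 a1 a2 a3,0%nat);(a3,2%nat);(b,1%nat)]
                          [(N2 a1 a2,0%nat);(N2 a3 b',1%nat);(a3,0%nat);(b',1%nat)].
        -- assert (Hc : In x (elems c)) by (rewrite !in_app_iff in Hx; tauto).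
           pose proof (IH c x Bc Sc Hc) as R.
           destruct (del x c) as [|c'|c'] eqn:E; cbn [DP] in R |- *.
           ++ destruct R as [-> ->]. split; [balt|]. split; [fel0|].
              dstep (Diff_refl (@nil (tree*nat))) [(a,0%nat);(b,1%nat);(Lf x,2%nat)] [(a,0%nat);(b,1%nat)].
           ++ destruct R as [R1 [R2 R3]]. split; [balt|]. split; [fel R2|].
              dstep R3 [(c,2%nat)] [(c',2%nat)].
           ++ destruct R as [[h' [-> R1]] [R2 R3]].
              inversion Bb as [|hh b1 b2 B1 B2|hh b1 b2 b3 B1 B2 B3]; subst; cbn [DP].
              ** split; [balt|]. split; [fel R2|].
                 dstep R3 [(N2 b1 b2,1%nat);(c,2%nat)] [(N3 b1 b2 c',1%nat);(c',2%nat)].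
              ** split; [balt|]. split; [fel R2|].
                 dstep R3 [(N3 b1 b2 b3,1%nat);(b3,2%nat);(c,2%nat)]
                          [(N2 b1 b2,1%nat);(N2 b3 c',2%nat);(b3,0%nat);(c',1%nat)].
Qed.

Definition grp (s : square) : Z * Z := (up (fst s), up (snd s)).
Definition cls (g : Z * Z) : nat :=
  ((if Z.even (fst g) then 0 else 1) + 2 * (if Z.even (snd g) then 0 else 1))%nat.

Lemma up_bnd : forall a, IZR (up a) - 1 <= a < IZR (up a).
Proof. intros a; destruct (archimed a); lra. Qed.

Definition Ug (g : Z * Z) (q : R * R) (p : pt) : Prop :=
  if Rle_dec (IZR (fst g)) (fst q) then fst q - 1 <= fst p else fst p <= fst q.
Definition kg (g : Z * Z) (q : R * R) : bool :=
  if Rle_dec (IZR (snd g)) (snd q) then true else false.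
Definition cg (g : Z * Z) (q : R * R) : R :=
  if Rle_dec (IZR (snd g)) (snd q) then snd q - 1 else snd q.

Lemma in_sq_iff : forall s q, in_square s q <-> Ug (grp s) q s /\ Yk (kg (grp s) q) (cg (grp s) q) s.
Proof.
  intros [a b] [x y]. unfold in_square, Ug, kg, cg, Yk, grp; simpl.
  destruct (up_bnd a), (up_bnd b).
  destruct (Rle_dec (IZR (up a)) x); destruct (Rle_dec (IZR (up b)) y); split; intros; lra.
Qed.

Lemma Ug_updown : forall g q, updown (Ug g q).
Proof.
  intros g q. unfold updown, Ug, ltp.
  destruct (Rle_dec (IZR (fst g)) (fst q)); [left|right]; intros p p' [H|[H _]] H'; lra.
Qed.

Lemma near_int : forall (I I' : Z) x, IZR I - 1 <= x < IZR I + 1 -> IZR I' - 1 <= x < IZR I' + 1 ->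
  (I' - 1 <= I <= I' + 1)%Z.
Proof.
  intros I I' x H1 H2.
  assert (A : (I < I' + 2)%Z) by (apply lt_IZR; rewrite plus_IZR; simpl; lra).
  assert (B : (I' < I + 2)%Z) by (apply lt_IZR; rewrite plus_IZR; simpl; lra).
  lia.
Qed.

Lemma even_eq : forall I I', (I' - 1 <= I <= I' + 1)%Z -> Z.even I = Z.even I' -> I = I'.
Proof.
  intros I I' H E.
  assert (HH : (I = I' - 1 \/ I = I' \/ I = I' + 1)%Z) by lia.
  destruct HH as [ -> | [ -> | -> ] ]; auto;
  rewrite ?Z.even_sub, ?Z.even_add in E; simpl in E;
  destruct (Z.even I'); simpl in E; discriminate.
Qed.

Lemma same_cls : forall s s' q, in_square s q -> in_square s' q -> cls (grp s) = cls (grp s') ->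
  grp s = grp s'.
Proof.
  intros [a b] [a' b'] [x y]. unfold in_square, cls, grp; simpl. intros H1 H2 Hc.
  destruct (up_bnd a), (up_bnd b), (up_bnd a'), (up_bnd b').
  assert (X : (up a' - 1 <= up a <= up a' + 1)%Z) by (apply (near_int _ _ x); lra).
  assert (Y : (up b' - 1 <= up b <= up b' + 1)%Z) by (apply (near_int _ _ y); lra).
  assert (Ex : Z.even (up a) = Z.even (up a')) by
    (destruct (Z.even (up a)), (Z.even (up a')), (Z.even (up b)), (Z.even (up b')); simpl in Hc; lia).
  assert (Ey : Z.even (up b) = Z.even (up b')) by
    (destruct (Z.even (up a)), (Z.even (up a')), (Z.even (up b)), (Z.even (up b')); simpl in Hc; lia).
  rewrite (even_eq _ _ X Ex), (even_eq _ _ Y Ey). reflexivity.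
Qed.

Lemma cls_lt : forall g, (cls g < 4)%nat.
Proof. intros g; unfold cls; destruct (Z.even (fst g)), (Z.even (snd g)); simpl; lia. Qed.

Definition enc (c : nat) (x : color) : nat :=
  match x with (l, k, s) => (c + 4 * (s + 4 * (k + 2 * l)))%nat end.

Lemma enc_inj : forall c c' l k s l' k' s', (c < 4)%nat -> (c' < 4)%nat -> (k <= 1)%nat -> (k' <= 1)%nat ->
  (s <= 3)%nat -> (s' <= 3)%nat -> enc c (l,k,s) = enc c' (l',k',s') -> c = c' /\ (l,k,s) = (l',k',s').
Proof.
  intros c c' l k s l' k' s' H1 H2 H3 H4 H5 H6 E. unfold enc in E.
  assert (c = c') by lia. assert (s = s') by lia. assert (k = k') by lia. assert (l = l') by lia.
  subst; auto.
Qed.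

Lemma enc_lt : forall c l k s, (c < 4)%nat -> (k <= 1)%nat -> (s <= 3)%nat -> (enc c (l,k,s) < 32 * (l + 1))%nat.
Proof. intros; unfold enc; lia. Qed.

Lemma col_bounds : forall h t s q, bal h t -> (s <= 3)%nat ->
  match col t s q with (l, k, σ) => (l <= h)%nat /\ (k <= 1)%nat /\ (σ <= 3)%nat end.
Proof.
  induction h as [|h IH]; intros t s q Hb Hs; rewrite col_eq; rewrite (bal_ht _ _ Hb).
  - inversion Hb; subst; simpl.
    destruct (pt_eq_dec q p); [lia|]. destruct (pt_eq_dec q p); lia.
  - destruct (pt_eq_dec q (top t)); [lia|]. destruct (pt_eq_dec q (bot t)); [lia|].
    inversion Hb; subst;
    repeat match goal with |- context [if ?c then _ else _] => destruct c end;
    match goal with |- match col ?c ?i q with _ => _ end =>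
      assert (Hbc : bal h c) by assumption; pose proof (IH c i q Hbc ltac:(lia)) as R;
      destruct (col c i q) as [[l k] σ]; lia end.
Qed.

Lemma bal_size : forall h t, bal h t -> (2 ^ h <= length (elems t))%nat.
Proof.
  induction 1; simpl; rewrite ?length_app; simpl; lia.
Qed.

Definition forest := (Z * Z -> option tree)%type.

Definition gelems (o : option tree) : list pt := match o with None => [] | Some t => elems t end.

Definition gins (x : pt) (o : option tree) : option tree :=
  match o with
  | None => Some (Lf x)
  | Some t => match ins x t with One t' => Some t' | Two a b => Some (N2 a b) end
  end.

Definition gdel (x : pt) (o : option tree) : option tree :=
  match o with
  | None => None
  | Some t => match del x t with DE => None | DF t' => Some t' | DS t' => Some t' end
  end.

Definition geq_dec (g g' : Z * Z) : {g = g'} + {g <> g'}.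
Proof. decide equality; apply Z.eq_dec. Defined.

Definition upd (F : forest) (g : Z * Z) (o : option tree) : forest :=
  fun g' => if geq_dec g' g then o else F g'.

Fixpoint FF (h : list update) : forest :=
  match h with
  | [] => fun _ => None
  | Ins s :: h' => let F := FF h' in upd F (grp s) (gins s (F (grp s)))
  | Del s :: h' => let F := FF h' in upd F (grp s) (gdel s (F (grp s)))
  end.

Definition colF (F : forest) (s : square) : nat :=
  match F (grp s) with None => 0%nat | Some t => enc (cls (grp s)) (col t 3 s) end.

Definition GI (o : option tree) : Prop :=
  match o with None => True | Some t => exists h, bal h t /\ srt (elems t) end.

Definition FI (h : list update) (F : forest) : Prop :=
  (forall g, GI (F g)) /\ (forall s g, In s (gelems (F g)) <-> present h s /\ grp s = g).

Lemma gins_spec : forall x o, GI o -> ~ In x (gelems o) ->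
  GI (gins x o) /\ (forall z, In z (gelems (gins x o)) <-> z = x \/ In z (gelems o)).
Proof.
  intros x [t|] HG Hn; simpl in *.
  - destruct HG as [h [Hb Hs]].
    pose proof (ins_elems t x Hs) as E. pose proof (ins_bal h t x Hb) as B.
    pose proof (ins_sorted_srt x (elems t) Hs Hn) as HSs.
    destruct (ins x t) as [t'|a b]; simpl in *.
    + split; [exists h; rewrite E; auto|]. intros z; rewrite E, ins_sorted_In; tauto.
    + split; [exists (S h); destruct B; split; [constructor; auto|]; simpl; rewrite E; auto|].
      intros z; simpl; rewrite E, ins_sorted_In; tauto.
  - split; [exists 0%nat; split; [constructor|simpl; split; auto; intros _ []]|].
    intros z; simpl; firstorder congruence.
Qed.

Lemma filter_keep_In : forall x l z, In z (filter (keep x) l) <-> z <> x /\ In z l.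
Proof.
  intros x l z. rewrite filter_In. unfold keep. destruct (pt_eq_dec z x); split; intros; try tauto; try congruence.
  destruct H; discriminate.
Qed.

Lemma gdel_spec : forall x o, GI o -> In x (gelems o) ->
  GI (gdel x o) /\ (forall z, In z (gelems (gdel x o)) <-> z <> x /\ In z (gelems o)).
Proof.
  intros x [t|] HG Hin; simpl in *; [|contradiction].
  destruct HG as [h [Hb Hs]].
  pose proof (del_spec h t x Hb Hs Hin) as D.
  destruct (del x t) as [|t'|t']; simpl in *.
  - destruct D as [_ ->]. split; auto. intros z; simpl; split; [intros []|intros [H1 [H2|[]]]; congruence].
  - destruct D as [B [E _]]. split; [exists h; split; auto; rewrite E; apply srt_filter; auto|].
    intros z; rewrite E, filter_keep_In; tauto.
  - destruct D as [[h' [_ B]] [E _]]. split; [exists h'; split; auto; rewrite E; apply srt_filter; auto|].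
    intros z; rewrite E, filter_keep_In; tauto.
Qed.

Lemma FI_hist : forall h, valid h -> FI h (FF h).
Proof.
  induction h as [|[s|s] h IH]; simpl; intros Hv.
  - split; [intros; simpl; auto|]. intros s g; simpl; tauto.
  - destruct Hv as [Hv Hn]. destruct (IH Hv) as [G M].
    assert (Hn' : ~ In s (gelems (FF h (grp s)))) by (rewrite M; tauto).
    destruct (gins_spec s _ (G (grp s)) Hn') as [G' M'].
    split.
    + intros g; unfold upd; destruct (geq_dec g (grp s)); auto.
    + intros z g; unfold upd; destruct (geq_dec g (grp s)) as [->|Hne].
      * rewrite M', M. simpl. intuition (subst; try congruence; auto).
      * rewrite M. simpl. intuition (subst; try congruence; auto).
  - destruct Hv as [Hv Hp]. destruct (IH Hv) as [G M].
    assert (Hin : In s (gelems (FF h (grp s)))) by (rewrite M; tauto).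
    destruct (gdel_spec s _ (G (grp s)) Hin) as [G' M'].
    split.
    + intros g; unfold upd; destruct (geq_dec g (grp s)); auto.
    + intros z g; unfold upd; destruct (geq_dec g (grp s)) as [->|Hne].
      * rewrite M', M. simpl. intuition (subst; try congruence; auto).
      * rewrite M. simpl. intuition (subst; try congruence; auto).
Qed.

Lemma size_hist : forall h, valid h -> exists L, NoDup L /\ length L = cur_size h /\
  forall s, present h s <-> In s L.
Proof.
  induction h as [|[s|s] h IH]; simpl; intros Hv.
  - exists []; split; [constructor|]; split; [reflexivity|]; intros z; simpl; tauto.
  - destruct Hv as [Hv Hn]. destruct (IH Hv) as [L [ND [Hl HL]]].
    exists (s :: L). split; [constructor; auto; rewrite <- HL; auto|]. split; [simpl; auto|].
    intros z; simpl; rewrite HL; firstorder congruence.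
  - destruct Hv as [Hv Hp]. destruct (IH Hv) as [L [ND [Hl HL]]].
    apply HL in Hp. destruct (in_split _ _ Hp) as [l1 [l2 E]]. subst L.
    apply NoDup_remove in ND. destruct ND as [ND Hn].
    exists (l1 ++ l2). split; auto. split.
    + rewrite length_app in *; simpl in Hl; lia.
    + intros z; rewrite HL, !in_app_iff; simpl. split.
      * intros [Hne [H|[H|H]]]; auto; congruence.
      * intros [H|H]; (split; [intros ->; apply Hn; rewrite in_app_iff; auto|]); auto.
Qed.

Lemma FI_some : forall h F s, FI h F -> present h s ->
  exists t hh, F (grp s) = Some t /\ bal hh t /\ srt (elems t) /\ In s (elems t).
Proof.
  intros h F s [G M] P.
  assert (Hin : In s (gelems (F (grp s)))) by (apply M; auto).
  specialize (G (grp s)). destruct (F (grp s)) as [t|]; simpl in *; [|contradiction].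
  destruct G as [hh [B S]]. exists t, hh; auto.
Qed.

Lemma height_log : forall h F g t hh, valid h -> FI h F -> F g = Some t -> bal hh t ->
  (hh <= Nat.log2 (cur_size h))%nat.
Proof.
  intros h F g t hh Hv [G M] E B.
  destruct (size_hist h Hv) as [L [ND [Hl HL]]].
  assert (Hs : srt (elems t)) by (specialize (G g); rewrite E in G; destruct G as [? [? ?]]; auto).
  assert (Hinc : incl (elems t) L).
  { intros z Hz. apply HL. apply (M z g). rewrite E; auto. }
  pose proof (NoDup_incl_length (srt_nodup _ Hs) Hinc) as Hlen.
  pose proof (bal_size _ _ B).
  rewrite <- (Nat.log2_pow2 hh) by lia. apply Nat.log2_le_mono. eapply Nat.le_trans; [eassumption|]. rewrite <- Hl. exact Hlen.
Qed.

Lemma recolor_forest : forall h h' F F' g0 k, FI h F -> FI h' F' ->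
  (forall g, g <> g0 -> F' g = F g) ->
  (match F g0, F' g0 with Some t, Some t' => Diff (LS t 3) (LS t' 3) k | _, _ => True end) ->
  recolorings_at_most (present h) (present h') (colF F) (colF F') (2 * k).
Proof.
  intros h h' F F' g0 k FIh FIh' Hoth HD.
  destruct (F g0) as [t|] eqn:E1; destruct (F' g0) as [t'|] eqn:E2.
  - destruct FIh as [G M], FIh' as [G' M'].
    pose proof (G g0) as Gt. rewrite E1 in Gt. destruct Gt as [h1 [B1 S1]].
    pose proof (G' g0) as Gt'. rewrite E2 in Gt'. destruct Gt' as [h2 [B2 S2]].
    destruct (recolor h1 t 3 h2 t' 3 k B1 S1 B2 S2 HD) as [L [HlL HL]].
    exists L. split; auto. intros s P P' Hne.
    destruct (geq_dec (grp s) g0) as [Eg|Eg].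
    + assert (I1 : In s (elems t)) by (assert (X := proj2 (M s g0) (conj P Eg)); rewrite E1 in X; exact X).
      assert (I2 : In s (elems t')) by (assert (X := proj2 (M' s g0) (conj P' Eg)); rewrite E2 in X; exact X).
      apply HL; auto. intros Hc. apply Hne. unfold colF. rewrite Eg, E1, E2, Hc. reflexivity.
    + exfalso. apply Hne. unfold colF. rewrite (Hoth _ Eg). reflexivity.
  - exists []. split; [simpl; lia|]. intros s P P' Hne. exfalso.
    destruct (geq_dec (grp s) g0) as [Eg|Eg].
    + destruct FIh' as [G' M']. assert (X := proj2 (M' s g0) (conj P' Eg)). rewrite E2 in X. exact X.
    + apply Hne. unfold colF. rewrite (Hoth _ Eg). reflexivity.
  - exists []. split; [simpl; lia|]. intros s P P' Hne. exfalso.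
    destruct (geq_dec (grp s) g0) as [Eg|Eg].
    + destruct FIh as [G M]. assert (X := proj2 (M s g0) (conj P Eg)). rewrite E1 in X. exact X.
    + apply Hne. unfold colF. rewrite (Hoth _ Eg). reflexivity.
  - exists []. split; [simpl; lia|]. intros s P P' Hne. exfalso.
    destruct (geq_dec (grp s) g0) as [Eg|Eg].
    + destruct FIh as [G M]. assert (X := proj2 (M s g0) (conj P Eg)). rewrite E1 in X. exact X.
    + apply Hne. unfold colF. rewrite (Hoth _ Eg). reflexivity.
Qed.

Lemma rec_weaken : forall S1 S2 c1 c2 k k', recolorings_at_most S1 S2 c1 c2 k -> (k <= k')%nat ->
  recolorings_at_most S1 S2 c1 c2 k'.
Proof. intros S1 S2 c1 c2 k k' [L [H1 H2]] H; exists L; split; auto; lia. Qed.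

Lemma main_cf : forall h, valid h -> conflict_free (present h) (colF (FF h)).
Proof.
  intros h Hv q [s0 [P0 Q0]].
  pose proof (FI_hist h Hv) as FIh.
  destruct (FI_some h (FF h) s0 FIh P0) as [t [hh [E [B [S I0]]]]].
  set (g0 := grp s0) in *.
  destruct (tree_cf hh t 3 B S (Ug g0 q) (kg g0 q) (cg g0 q) (Ug_updown g0 q)) as [p [Ip [Up [Yp Uniq]]]].
  { exists s0. split; auto. apply in_sq_iff; auto. }
  destruct FIh as [G M].
  assert (Pp : present h p /\ grp p = g0) by (apply M; rewrite E; auto).
  destruct Pp as [Pp Gp].
  exists p. split; auto. split; [apply in_sq_iff; rewrite Gp; auto|].
  intros s' P' Q' Hne Hc.
  destruct (FI_some h (FF h) s' (conj G M) P') as [t' [hh' [E' [B' [S' I']]]]].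
  unfold colF in Hc. rewrite E', Gp in Hc. fold g0 in Hc. rewrite E in Hc.
  pose proof (col_bounds hh' t' 3 s' B' ltac:(lia)) as C1.
  pose proof (col_bounds hh t 3 p B ltac:(lia)) as C2.
  destruct (col t' 3 s') as [[l1 k1] σ1] eqn:Ec1. destruct (col t 3 p) as [[l2 k2] σ2] eqn:Ec2.
  destruct C1 as [_ [C1k C1s]]. destruct C2 as [_ [C2k C2s]].
  destruct (enc_inj _ _ _ _ _ _ _ _ (cls_lt _) (cls_lt _) C1k C2k C1s C2s Hc) as [Hcl Hcc].
  assert (Hg : grp s' = grp p).
  { apply (same_cls s' p q); auto. apply in_sq_iff; rewrite Gp; auto. rewrite Gp; auto. }
  rewrite Hg, Gp in E'. rewrite E in E'. inversion E'; subst t'.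
  apply (Uniq s'); auto.
  - rewrite <- Gp, <- Hg. apply in_sq_iff; auto.
  - pose proof (proj1 (in_sq_iff s' q) Q') as [X Y]. rewrite Hg, Gp in Y. auto.
  - congruence.
Qed.

Lemma main_uses : forall h, valid h -> uses_at_most (present h) (colF (FF h)) (logbound 32 (cur_size h)).
Proof.
  intros h Hv. pose proof (FI_hist h Hv) as FIh.
  exists (seq 0 (32 * (Nat.log2 (cur_size h) + 1))). split; [rewrite length_seq; unfold logbound; lia|].
  intros s P. apply in_seq.
  destruct (FI_some h (FF h) s FIh P) as [t [hh [E [B [S I0]]]]].
  pose proof (height_log h (FF h) _ t hh Hv FIh E B) as Hh.
  unfold colF. rewrite E.
  pose proof (col_bounds hh t 3 s B ltac:(lia)) as C.
  destruct (col t 3 s) as [[l k] σ]. destruct C as [Cl [Ck Cs]].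
  pose proof (enc_lt (cls (grp s)) l k σ (cls_lt _) Ck Cs). nia.
Qed.

Lemma LS_step : forall t t' k, Diff (inner t) (inner t') k -> Diff (LS t 3) (LS t' 3) (k + 2).
Proof.
  intros t t' k D. replace (k + 2)%nat with (k + length [(t,3%nat)] + length [(t',3%nat)])%nat by (simpl; lia).
  eapply (Diff_step _ _ _ _ _ _ _ D); unfold LS; mem.
Qed.

Lemma main_rec : forall h u, valid h -> valid (u :: h) ->
  recolorings_at_most (present h) (present (u :: h)) (colF (FF h)) (colF (FF (u :: h)))
    (logbound 32 (cur_size (u :: h))).
Proof.
  intros h u Hv Hv'.
  pose proof (FI_hist h Hv) as FIh. pose proof (FI_hist (u :: h) Hv') as FIh'.
  destruct (size_hist h Hv) as [L [ND [Hl HL]]].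
  destruct u as [s0|s0].
  -
    set (g0 := grp s0).
    destruct (FF h g0) as [t|] eqn:E.
    + destruct FIh as [G M]. pose proof (G g0) as Gt. rewrite E in Gt. destruct Gt as [hh [B Ss]].
      pose proof (height_log h (FF h) g0 t hh Hv (conj G M) E B) as Hh.
      pose proof (ins_diff hh t s0 B) as D.
      apply rec_weaken with (2 * (7 * hh + 4))%nat.
      * apply (recolor_forest h (Ins s0 :: h) (FF h) (FF (Ins s0 :: h)) g0); auto.
        -- split; auto.
        -- intros g Hg. simpl. unfold upd. destruct (geq_dec g (grp s0)); [contradiction|auto].
        -- rewrite E. simpl. unfold upd. fold g0. destruct (geq_dec g0 g0) as [_|C]; [|congruence].
           rewrite E. simpl. destruct (ins s0 t) as [t'|a b]; simpl in D.
           ++ eapply Diff_le; [apply LS_step; exact D|lia].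
           ++ eapply Diff_le; [eapply (Diff_step _ _ _ _ [(t,3%nat)] [(N2 a b,3%nat);(a,0%nat);(b,1%nat)] _ D); unfold LS; mem|simpl; lia].
      * unfold logbound. simpl cur_size. pose proof (Nat.log2_le_mono (cur_size h) (S (cur_size h)) ltac:(lia)). lia.
    + apply rec_weaken with 0%nat; [|lia].
      replace 0%nat with (2 * 0)%nat by lia.
      apply (recolor_forest h (Ins s0 :: h) (FF h) (FF (Ins s0 :: h)) g0); auto.
      * intros g Hg. simpl. unfold upd. destruct (geq_dec g (grp s0)); [contradiction|auto].
      * rewrite E. auto.
  -
    set (g0 := grp s0).
    destruct Hv' as [_ P0].
    destruct (FI_some h (FF h) s0 FIh P0) as [t [hh [E [B [Ss I0]]]]].
    fold g0 in E.
    pose proof (height_log h (FF h) g0 t hh Hv FIh E B) as Hh.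
    pose proof (del_spec hh t s0 B Ss I0) as D.
    assert (Hn : (1 <= cur_size h)%nat) by (rewrite <- Hl; destruct L; [apply HL in P0; destruct P0|simpl; lia]).
    apply rec_weaken with (2 * (11 * hh + 2))%nat.
    + apply (recolor_forest h (Del s0 :: h) (FF h) (FF (Del s0 :: h)) g0); auto.
      * intros g Hg. simpl. unfold upd. destruct (geq_dec g (grp s0)); [contradiction|auto].
      * rewrite E. simpl. unfold upd. fold g0. destruct (geq_dec g0 g0) as [_|C]; [|congruence].
        rewrite E. simpl. destruct (del s0 t) as [|t'|t']; simpl in D |- *; auto.
        -- destruct D as [_ [_ D]]. apply LS_step; exact D.
        -- destruct D as [_ [_ D]]. apply LS_step; exact D.
    + unfold logbound. simpl cur_size.
      pose proof (Nat.log2_succ_le (Nat.pred (cur_size h))) as X.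
      replace (S (Nat.pred (cur_size h))) with (cur_size h) in X by lia. lia.
Qed.

Theorem mainTheorem4 :
  exists (c : nat) (col : list update -> square -> nat),
    forall h : list update, valid h ->
      conflict_free (present h) (col h) /\
      uses_at_most (present h) (col h) (logbound c (cur_size h)) /\
      (forall u : update, valid (u :: h) ->
         recolorings_at_most (present h) (present (u :: h))
           (col h) (col (u :: h)) (logbound c (cur_size (u :: h)))).
Proof.
  exists 32%nat, (fun h => colF (FF h)). intros h Hv.
  split; [apply main_cf; auto|]. split; [apply main_uses; auto|].
  intros u Hv'. apply main_rec; auto.
Qed.
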